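(* Let $k\ge 1$, $n\ge 2$, and let $s,t\in S(n,k)$ be compatible. Let $\alpha$ be the number of occurrences in $s$ of a most frequent symbol of $s$. Then $d(s,t)\le 2(n-\alpha)$.
   Context: Strings here are arbitrary (not normalized) finite words. The prefix reversal (flip) $f^{(i)}$ applied to $s=s_1\cdots s_n$ ($1\le i\le n$) yields $s_i s_{i-1}\cdots s_1 s_{i+1}\cdots s_n$. Two strings are \emph{compatible} if each symbol occurs the same number of times in both. For compatible $s,t$, $d(s,t)$ is the minimum number of prefix reversals transforming $s$ into $t$. $S(n,k)$ is the set of strings of length $n$ whose set of occurring symbols is exactly $\{0,\dots,k-1\}$. *)

(* Defs.v *)
From mathcomp Require Import all_boot.
Set Implicit Arguments. Unset Strict Implicit. Unset Printing Implicit Defensive.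

(* prefix reversal f^(i): s_i ... s_1 s_{i+1} ... s_n  (meaningful for 1 <= i <= size s) *)
Definition flip (i : nat) (s : seq nat) : seq nat := rev (take i s) ++ drop i s.

Fixpoint reach (m : nat) (s t : seq nat) : Prop :=
  match m with
  | 0 => s = t
  | m'.+1 => exists i, 1 <= i <= size s /\ reach m' (flip i s) t
  end.

Definition compatible (s t : seq nat) : Prop := forall a, count_mem a s = count_mem a t.

(* d(s,t) <= m : some sequence of at most m prefix reversals turns s into t *)
Definition dist_le (s t : seq nat) (m : nat) : Prop := exists2 j, j <= m & reach j s t.

Definition inS (n k : nat) (s : seq nat) : Prop :=
  size s = n /\ (forall a, (a \in s) = (a < k)).

Definition maxfreq (s : seq nat) : nat := \max_(a <- s) count_mem a s.

(* Main.v *)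
Require Import Defs.
From mathcomp Require Import all_boot.
From mathcomp Require Import zify.
Set Implicit Arguments. Unset Strict Implicit.

Lemma size_flip i s : size (flip i s) = size s.
Proof. by rewrite /flip size_cat size_rev -size_cat cat_take_drop. Qed.

Lemma flip_cat i s w : i <= size s -> flip i (s ++ w) = flip i s ++ w.
Proof.
move=> hi; rewrite /flip take_cat drop_cat.
case: ltnP => h; first by rewrite catA.
have -> : i = size s by lia.
by rewrite subnn take0 drop0 cats0 take_size drop_size cats0.
Qed.

Lemma flipK i s : i <= size s -> flip i (flip i s) = s.
Proof.
move=> hi; rewrite /flip.
have hs : size (rev (take i s)) = i by rewrite size_rev size_take; case: ltnP hi; lia.
rewrite take_cat drop_cat hs ltnn subnn take0 drop0 cats0.
by rewrite revK cat_take_drop.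
Qed.

Lemma perm_flip i s : perm_eq (flip i s) s.
Proof.
rewrite /flip -[X in perm_eq _ X](cat_take_drop i s) perm_cat2r; by rewrite perm_rev.
Qed.

Lemma reach_size m s t : reach m s t -> size t = size s.
Proof.
elim: m s => [s /= -> //|m IH s /= [i [_ /IH]]]. by rewrite size_flip.
Qed.

Lemma reach_perm m s t : reach m s t -> perm_eq s t.
Proof.
elim: m s => [s /= -> //|m IH s /= [i [_ /IH]]].
by apply: perm_trans; rewrite perm_sym perm_flip.
Qed.

Lemma reach_cat m s t w : reach m s t -> reach m (s ++ w) (t ++ w).
Proof.
elim: m s => [s /= -> //|m IH s /= [i [hi /IH h]]].
exists i; split; last by rewrite flip_cat //; case/andP: hi.
rewrite size_cat; case/andP: hi => h1 h2; rewrite h1 /=; lia.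
Qed.

Lemma reach_trans m p s u t : reach m s u -> reach p u t -> reach (m + p) s t.
Proof.
elim: m s => [s /= -> //|m IH s /= [i [hi h]] h2].
exists i; split => //; exact: IH.
Qed.

Lemma reach_sym m s t : reach m s t -> reach m t s.
Proof.
elim: m s => [s /= -> //|m IH s /= [i [hi h]]].
have := IH _ h => h'.
have h1 : reach 1 (flip i s) s.
  exists i; split; last by rewrite /= flipK //; case/andP: hi.
  by rewrite size_flip.
by have := reach_trans h' h1; rewrite addn1.
Qed.

Lemma bring (x : nat) (s : seq nat) : x \in s -> exists u, reach 2 s (rcons u x).
Proof.
move=> xs.
have hi : index x s < size s by rewrite index_mem.
have ht : take (index x s).+1 s = rcons (take (index x s) s) x.
  by rewrite (take_nth x hi) nth_index.
set r := rev (take (index x s) s) ++ drop (index x s).+1 s.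
have hf : flip (index x s).+1 s = x :: r by rewrite /flip ht rev_rcons.
exists (rev r); exists (index x s).+1; split; first by rewrite /=.
exists (size s); split.
  rewrite size_flip; apply/andP; split => //; lia.
have hsz : size (x :: r) = size s by rewrite -hf size_flip.
by rewrite hf /flip -hsz take_size drop_size cats0 rev_cons.
Qed.

Lemma main n : forall (s t : seq nat) (a : nat), size s = n -> perm_eq s t ->
  dist_le s t (2 * (n - count_mem a s)).
Proof.
elim: n => [|n IH] s t a.
  move/size0nil => -> hp; have := perm_size hp; move=> /esym/size0nil ->.
  by exists 0.
case/lastP: s => [//|s' x]; case/lastP: t => [hs hp|t' y hs hp].
  by have := perm_size hp; rewrite hs.
have hs' : size s' = n by move: hs; rewrite size_rcons; case.
have cnt : forall (w : seq nat) (z : nat), count_mem a (rcons w z) = count_mem a w + (z == a).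
  by move=> w z; rewrite -cats1 count_cat /= addn0 eq_sym.
have cle : count_mem a s' <= n by rewrite -hs' count_size.
case: (eqVneq x y) => [exy|nxy].
  subst y.
  have hp' : perm_eq s' t' by move: hp; rewrite -!cats1 perm_cat2r.
  have [j hj hr] := IH s' t' a hs' hp'.
  exists j; last by rewrite -!cats1; exact: reach_cat.
  rewrite cnt; move: hj cle; set c := count _ s'; case: (x == a) => /=; lia.
case: (eqVneq y a) => [eya|nya].
  subst y.
  have xt : x \in rcons t' a by rewrite -(perm_mem hp) mem_rcons mem_head.
  have [u hu] := bring xt.
  have hpu := reach_perm hu.
  have hp' : perm_eq s' u.
    by move: (perm_trans hp hpu); rewrite -!cats1 perm_cat2r.
  have [j hj hr] := IH s' u a hs' hp'.
  exists (j + 2).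
    rewrite cnt (negbTE (nxy : x != a)) addn0; move: hj cle; set c := count _ s'; lia.
  apply: reach_trans (reach_sym hu).
  by rewrite -!cats1; exact: reach_cat.
have ys : y \in rcons s' x by rewrite (perm_mem hp) mem_rcons mem_head.
have [u hu] := bring ys.
have hpu := reach_perm hu.
have hp' : perm_eq u t'.
  by have := hpu; rewrite perm_sym => h; move: (perm_trans h hp); rewrite -!cats1 perm_cat2r.
have hsu : size u = n.
  by have := reach_size hu; rewrite !size_rcons hs'; case.
have [j hj hr] := IH u t' a hsu hp'.
have cu : count_mem a (rcons s' x) = count_mem a u.
  move/permP: (hpu) => /(_ (pred1 a)) ->; rewrite !cnt (negbTE nya) addn0.
  by [].
have cle' : count_mem a u <= n by rewrite -hsu count_size.
exists (2 + j).
  rewrite cu; move: hj cle'; set c := count _ u; lia.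
apply: reach_trans hu _; rewrite -!cats1; exact: reach_cat.
Qed.

Lemma maxfreq_attained s : maxfreq s = 0 \/ exists a, maxfreq s = count_mem a s.
Proof.
rewrite /maxfreq; elim/big_rec: _ => [|x v _ [->|[a ->]]]; first by left.
- by right; exists x.
- rewrite /maxn; case: ltnP => _; right; [exists a|exists x]; done.
Qed.

Theorem lemma5p2 (n k : nat) (s t : seq nat) :
  1 <= k -> 2 <= n -> inS n k s -> inS n k t -> compatible s t ->
  dist_le s t (2 * (n - maxfreq s)).
Proof.
move=> _ _ [hs _] _ hc.
have hp : perm_eq s t by apply/allP => x _; apply/eqP; exact: hc.
case: (maxfreq_attained s) => [->|[a ->]]; last exact: main.
have [j hj hr] := main 0 hs hp.
by exists j => //; apply: leq_trans hj _; lia.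
Qed.
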